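(* Consider 3-stick folded ribbon unknots $K_{w,F}$ (the knot diagram $K$ is a triangle). The minimum ribbonlength of such a folded ribbon unknot is less than or equal to (1) $3\sqrt{3}$ when the folds at the three vertices are all of the same type, and (2) $\sqrt{3}$ when the fold at one vertex is of a different type from the other two.
   Context: A polygonal knot diagram $K$ is a piecewise linear immersion $S^1\to\mathbb{R}^2$ with vertices $v_1,\dots,v_n$ and edges $e_i=[v_i,v_{i+1}]$ (indices mod $n$), oriented by the labeling. The fold angle $\theta_i\in[0,\pi]$ at $v_i$ is the angle between $e_{i-1}$ and $e_i$. The folded ribbon $K_w$ of width $w$ is built by placing at each $v_i$ with $\theta_i<\pi$ a fold line of length $w/\cos(\theta_i/2)$ centered at $v_i$ perpendicular to the bisector of $\theta_i$, and joining ends of consecutive fold lines by boundary segments parallel to and at distance $w/2$ from $K$. Folding information $F$ records at each vertex whether the ribbon of $e_i$ lies over (overfold) or under (underfold) the ribbon of $e_{i-1}$; two folds are of the same type if both are overfolds or both are underfolds. $K_{w,F}$ is allowed if the ribbon is immersed away from the fold lines and admits a choice of crossing information (a continuous, antisymmetric, transitive $\pm1$-valued function on pairs of distinct points of the ribbon with the same image) agreeing with $F$ and with the crossing information of $K$. The ribbonlength of an allowed $K_{w,F}$ is $\operatorname{length}(K)/w$. *)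

(* Defs.v *)
From Stdlib Require Import Reals Lra.
Open Scope R_scope.

Definition pt : Type := (R * R)%type.
Definition padd (p q : pt) : pt := (fst p + fst q, snd p + snd q).
Definition psub (p q : pt) : pt := (fst p - fst q, snd p - snd q).
Definition pscale (c : R) (p : pt) : pt := (c * fst p, c * snd p).
Definition dot (p q : pt) : R := fst p * fst q + snd p * snd q.
Definition cross (p q : pt) : R := fst p * snd q - snd p * fst q.
Definition pnorm (p : pt) : R := sqrt (dot p p).
Definition rot90 (p : pt) : pt := (- snd p, fst p).

Definition vert (V : nat -> pt) (i : nat) : pt := V (i mod 3).
Definition edge (V : nat -> pt) (i : nat) : pt := psub (vert V (S i)) (vert V i).

Definition nondegenerate (V : nat -> pt) : Prop := cross (edge V 0) (edge V 1) <> 0.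

Definition length_K (V : nat -> pt) : R :=
  pnorm (edge V 0) + pnorm (edge V 1) + pnorm (edge V 2).

Definition to_prev (V : nat -> pt) (i : nat) : pt := psub (vert V (i + 2)) (vert V i).
Definition to_next (V : nat -> pt) (i : nat) : pt := psub (vert V (i + 1)) (vert V i).

Definition fold_angle (V : nat -> pt) (i : nat) : R :=
  acos (dot (to_prev V i) (to_next V i) / (pnorm (to_prev V i) * pnorm (to_next V i))).

Definition bisector (V : nat -> pt) (i : nat) : pt :=
  padd (pscale (/ pnorm (to_prev V i)) (to_prev V i))
       (pscale (/ pnorm (to_next V i)) (to_next V i)).

Definition fold_dir (V : nat -> pt) (i : nat) : pt :=
  pscale (/ pnorm (bisector V i)) (rot90 (bisector V i)).

(** The fold line at v_i is the segment centered at v_i, perpendicular to the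
    bisector of theta_i, of length w / cos(theta_i/2):
      { fold_pt V i d | -w/2 <= d <= w/2 }.
    The parameter d is the signed distance (positive = left side) from the
    point fold_pt V i d to the oriented line through e_i; the point with
    parameter d on the fold line at v_{i+1} is at signed distance -d from the
    line through e_i (the ribbon flips at a fold). *)
Definition fold_pt (V : nat -> pt) (i : nat) (d : R) : pt :=
  padd (vert V i) (pscale (d / cos (fold_angle V i / 2)) (fold_dir V i)).

(** * The folded ribbon K_w
    Abstract ribbon points are triples (i, s, d) with i < 3, 0 <= s <= 1,
    |d| <= w/2.  The piece of the ribbon belonging to edge e_i is the region
    between the fold lines at v_i and v_{i+1}, swept by the segments
    (parallel to e_i, at signed distance d from it) joining the fold-line
    points with equal distance to e_i; d = +-w/2 gives the boundary segments. *)
Definition rpt : Type := (nat * R * R)%type.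
Definition rp_i (p : rpt) : nat := fst (fst p).
Definition rp_s (p : rpt) : R := snd (fst p).
Definition rp_d (p : rpt) : R := snd p.

Definition in_ribbon (w : R) (p : rpt) : Prop :=
  (rp_i p < 3)%nat /\ 0 <= rp_s p <= 1 /\ - (w / 2) <= rp_d p <= w / 2.

Definition ribbon_map (V : nat -> pt) (i : nat) (s d : R) : pt :=
  padd (pscale (1 - s) (fold_pt V i d)) (pscale s (fold_pt V (S i) (- d))).

Definition image (V : nat -> pt) (p : rpt) : pt := ribbon_map V (rp_i p) (rp_s p) (rp_d p).

Definition glue1 (p q : rpt) : Prop :=
  rp_s p = 1 /\ rp_s q = 0 /\ rp_i q = (S (rp_i p)) mod 3 /\ rp_d q = - rp_d p.

Definition same_pt (p q : rpt) : Prop := p = q \/ glue1 p q \/ glue1 q p.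

Definition near (delta : R) (p q : rpt) : Prop :=
  exists p' q', same_pt p p' /\ same_pt q q' /\ rp_i p' = rp_i q' /\
    Rabs (rp_s p' - rp_s q') + Rabs (rp_d p' - rp_d q') < delta.

Definition immersed_away_from_folds (V : nat -> pt) (w : R) : Prop :=
  forall i s d, (i < 3)%nat -> 0 < s < 1 -> - (w / 2) <= d <= w / 2 ->
  exists delta, 0 < delta /\
    forall s1 d1 s2 d2,
      0 < s1 < 1 -> - (w / 2) <= d1 <= w / 2 ->
      0 < s2 < 1 -> - (w / 2) <= d2 <= w / 2 ->
      Rabs (s1 - s) + Rabs (d1 - d) < delta ->
      Rabs (s2 - s) + Rabs (d2 - d) < delta ->
      ribbon_map V i s1 d1 = ribbon_map V i s2 d2 -> s1 = s2 /\ d1 = d2.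

Definition double_pt (V : nat -> pt) (w : R) (p q : rpt) : Prop :=
  in_ribbon w p /\ in_ribbon w q /\ ~ same_pt p q /\ image V p = image V q.

(** Crossing information: a continuous, antisymmetric, transitive +-1-valued
    function on pairs of distinct ribbon points with the same image
    (sigma p q = 1 means p lies over q). *)
Definition crossing_info (V : nat -> pt) (w : R) (sigma : rpt -> rpt -> R) : Prop :=
  (forall p q, double_pt V w p q -> sigma p q = 1 \/ sigma p q = -1) /\
  (forall p q p' q', double_pt V w p q -> same_pt p p' -> same_pt q q' ->
     in_ribbon w p' -> in_ribbon w q' -> sigma p' q' = sigma p q) /\
  (forall p q, double_pt V w p q -> sigma q p = - sigma p q) /\
  (forall p q r, double_pt V w p q -> double_pt V w q r -> double_pt V w p r ->
     sigma p q = 1 -> sigma q r = 1 -> sigma p r = 1) /\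
  (* continuity (= local constancy, as sigma is +-1 valued) *)
  (forall p q, double_pt V w p q -> exists delta, 0 < delta /\
     forall p' q', near delta p p' -> near delta q q' -> double_pt V w p' q' ->
       sigma p' q' = sigma p q).

(** Folding information F : nat -> bool; F i = true means the fold at v_i is an
    overfold (ribbon of e_i over ribbon of e_{i-1}), false an underfold. *)
Definition agrees_with_folds (V : nat -> pt) (w : R) (F : nat -> bool)
    (sigma : rpt -> rpt -> R) : Prop :=
  exists delta, 0 < delta /\
    forall i p q, (i < 3)%nat ->
      rp_i p = i -> rp_s p < delta ->
      rp_i q = (i + 2) mod 3 -> 1 - delta < rp_s q ->
      double_pt V w p q ->
      sigma p q = (if F i then 1 else -1).

(** K_{w,F} is allowed.  (The triangle K has no crossings, so agreement with
    the crossing information of K is vacuous.) *)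
Definition allowed (V : nat -> pt) (w : R) (F : nat -> bool) : Prop :=
  immersed_away_from_folds V w /\
  exists sigma, crossing_info V w sigma /\ agrees_with_folds V w F sigma.

Definition ribbonlength (V : nat -> pt) (w : R) : R := length_K V / w.

Definition all_same_type (F : nat -> bool) : Prop := F 0%nat = F 1%nat /\ F 1%nat = F 2%nat.

(* inf { ribbonlength of allowed 3-stick K_{w,F} with folding information F } <= c *)
Definition min_ribbonlength_le (F : nat -> bool) (c : R) : Prop :=
  forall eps, 0 < eps -> exists (V : nat -> pt) (w : R),
    nondegenerate V /\ 0 < w /\ allowed V w F /\ ribbonlength V w <= c + eps.

(* Main.v *)
Require Import Defs.
From Stdlib Require Import Reals Lra Lia.
Open Scope R_scope.

Definition c3 := sqrt 3.
Lemma c3sq : c3 * c3 = 3. Proof. unfold c3; apply sqrt_sqrt; lra. Qed.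
Lemma c3sq2 : c3 ^ 2 = 3. Proof. rewrite <- c3sq; ring. Qed.
Lemma c3pos : 0 < c3. Proof. unfold c3; apply sqrt_lt_R0; lra. Qed.

Lemma sqrt4 : sqrt 4 = 2.
Proof. replace 4 with (2*2) by ring. apply sqrt_square; lra. Qed.

Lemma fold_pt_gen V i d :
  dot (to_prev V i) (to_prev V i) = 4 -> dot (to_next V i) (to_next V i) = 4 ->
  dot (to_prev V i) (to_next V i) = 2 ->
  fold_pt V i d = padd (vert V i) (pscale (d/3) (rot90 (padd (to_prev V i) (to_next V i)))).
Proof.
  intros H1 H2 H3.
  unfold fold_pt, fold_angle, fold_dir, bisector, pnorm.
  rewrite H1, H2, H3, sqrt4.
  replace (2 / (2*2)) with (cos (PI/3)) by (rewrite cos_PI3; field).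
  rewrite acos_cos by (pose proof PI_RGT_0; split; lra).
  replace (PI/3/2) with (PI/6) by field. rewrite cos_PI6. fold c3.
  destruct (to_prev V i) as [a1 a2]; destruct (to_next V i) as [b1 b2].
  unfold dot in *; simpl in *.
  assert (Hb: (/ 2 * a1 + / 2 * b1) * (/ 2 * a1 + / 2 * b1) +
     (/ 2 * a2 + / 2 * b2) * (/ 2 * a2 + / 2 * b2) = 3) by nra.
  rewrite Hb. fold c3.
  pose proof c3pos. pose proof c3sq.
  unfold padd, pscale, rot90; simpl. f_equal.
  - replace (d / (c3 / 2) * (/ c3 * - (/ 2 * a2 + / 2 * b2))) with (d/(c3*c3) * - (a2+b2)) by (field; lra).
    rewrite H0; reflexivity.
  - replace (d / (c3 / 2) * (/ c3 * (/ 2 * a1 + / 2 * b1))) with (d/(c3*c3) * (a1+b1)) by (field; lra).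
    rewrite H0; reflexivity.
Qed.

Definition V0 (n : nat) : pt :=
  match n with 0%nat => (0,0) | 1%nat => (2,0) | _ => (1, c3) end.

Ltac pteq := pose proof c3sq; pose proof c3pos;
  unfold padd, pscale, rot90, psub, dot; simpl; try (f_equal; nra).

Lemma FP0 d : fold_pt V0 0 d = (- (d*c3/3), d).
Proof.
  rewrite fold_pt_gen; unfold to_prev, to_next, vert; simpl; pteq.
Qed.
Lemma FP1 d : fold_pt V0 1 d = (2 - d*c3/3, - d).
Proof.
  rewrite fold_pt_gen; unfold to_prev, to_next, vert; simpl; pteq.
Qed.
Lemma FP2 d : fold_pt V0 2 d = (1 + 2*d*c3/3, c3).
Proof.
  rewrite fold_pt_gen; unfold to_prev, to_next, vert; simpl; pteq.
Qed.
Lemma FP3 d : fold_pt V0 3 d = fold_pt V0 0 d.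
Proof. reflexivity. Qed.

Definition dist (k : nat) (X : pt) : R :=
  match k with
  | 0%nat => snd X
  | 1%nat => - (c3/2) * (fst X - 2) - snd X / 2
  | _ => (c3/2) * (fst X - 1) - (snd X - c3) / 2 end.
Definition along (k : nat) (X : pt) : R :=
  match k with
  | 0%nat => fst X
  | 1%nat => (- (fst X - 2) + c3 * snd X) / 2
  | _ => (- (fst X - 1) - c3 * (snd X - c3)) / 2 end.

Lemma dist_piece k s d : (k < 3)%nat -> dist k (ribbon_map V0 k s d) = d.
Proof.
  intros Hk. pose proof c3sq. pose proof c3pos.
  destruct k as [|[|[|k]]]; try lia; unfold ribbon_map;
  rewrite ?FP3, ?FP0, ?FP1, ?FP2; unfold padd, pscale; simpl.
  all: field_simplify; rewrite ?c3sq2; field.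
Qed.
Lemma along_piece k s d : (k < 3)%nat ->
  along k (ribbon_map V0 k s d) = - (d*c3/3) + s * (2 + 2*d*c3/3).
Proof.
  intros Hk. pose proof c3sq. pose proof c3pos.
  destruct k as [|[|[|k]]]; try lia; unfold ribbon_map;
  rewrite ?FP3, ?FP0, ?FP1, ?FP2; unfold padd, pscale; simpl.
  all: field_simplify; rewrite ?c3sq2; field.
Qed.
Lemma dist_sum X : dist 0 X + dist 1 X + dist 2 X = c3.
Proof. destruct X; simpl; field. Qed.
Lemma dist_fold0 e : dist 1 (fold_pt V0 0 e) = c3.
Proof. rewrite FP0; simpl. pose proof c3sq. field_simplify; rewrite ?c3sq2; field. Qed.
Lemma dist_fold1 e : dist 2 (fold_pt V0 1 e) = c3.
Proof. rewrite FP1; simpl. pose proof c3sq. field_simplify; rewrite ?c3sq2; field. Qed.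
Lemma dist_fold2 e : dist 0 (fold_pt V0 2 e) = c3.
Proof. rewrite FP2; simpl. reflexivity. Qed.

Lemma rm0 V k d : ribbon_map V k 0 d = fold_pt V k d.
Proof. unfold ribbon_map; destruct (fold_pt V k d), (fold_pt V (S k) (-d));
  unfold padd, pscale; simpl; f_equal; ring. Qed.
Lemma rm1 V k d : ribbon_map V k 1 d = fold_pt V (S k) (-d).
Proof. unfold ribbon_map; destruct (fold_pt V k d), (fold_pt V (S k) (-d));
  unfold padd, pscale; simpl; f_equal; ring. Qed.

Lemma inj k w s1 d1 s2 d2 : (k < 3)%nat -> w < 2 * c3 ->
  - (w/2) <= d1 <= w/2 -> - (w/2) <= d2 <= w/2 ->
  ribbon_map V0 k s1 d1 = ribbon_map V0 k s2 d2 -> s1 = s2 /\ d1 = d2.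
Proof.
  intros Hk Hw H1 H2 E.
  assert (Hd : d1 = d2).
  { rewrite <- (dist_piece k s1 d1 Hk), <- (dist_piece k s2 d2 Hk), E; reflexivity. }
  subst d2. split; [|reflexivity].
  pose proof (along_piece k s1 d1 Hk) as A1. pose proof (along_piece k s2 d1 Hk) as A2.
  rewrite E in A1. rewrite A1 in A2.
  pose proof c3sq; pose proof c3pos.
  assert (Hf : 0 < 2 + 2 * d1 * c3 / 3) by nra.
  apply (Rmult_eq_reg_r (2 + 2 * d1 * c3 / 3)); [lra|lra].
Qed.

Lemma neq_piece w i s d j t e : w < 2*c3 -> (i < 3)%nat ->
  - (w/2) <= d <= w/2 -> - (w/2) <= e <= w/2 ->
  ribbon_map V0 i s d = ribbon_map V0 j t e -> ~ same_pt (i,s,d) (j,t,e) -> i <> j.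
Proof.
  intros Hw Hi Hd He E N ->. destruct (inj j w s d t e Hi Hw Hd He E); subst.
  apply N; left; reflexivity.
Qed.

Ltac distc k :=
  match goal with E : _ = ribbon_map V0 _ ?t ?e |- _ =>
    apply (f_equal (dist k)) in E;
    rewrite ?dist_fold0, ?dist_fold1, ?dist_fold2, dist_piece in E by lia; lra end.

Lemma aux w i s d j t e : 0 < w < 2*c3 -> (i < 3)%nat -> (j < 3)%nat ->
  0 <= s <= 1 -> 0 <= t <= 1 ->
  - (w/2) <= d <= w/2 -> - (w/2) <= e <= w/2 ->
  ribbon_map V0 i s d = ribbon_map V0 j t e -> ~ same_pt (i,s,d) (j,t,e) -> 0 < s < 1.
Proof.
  intros Hw Hi Hj Hs Ht Hd He E N.
  pose proof (neq_piece w i s d j t e ltac:(lra) Hi Hd He E N) as Hij.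
  pose proof c3pos.
  destruct (Req_dec s 0) as [->|H0]; [exfalso|destruct (Req_dec s 1) as [->|H1]; [exfalso|lra]].
  - rewrite rm0 in E.
    destruct i as [|[|[|i]]]; try lia; destruct j as [|[|[|j]]]; try lia.
    + distc 1%nat.
    + assert (E2 : ribbon_map V0 2 1 (-d) = ribbon_map V0 2 t e)
        by (rewrite rm1, Ropp_involutive, FP3; exact E).
      destruct (inj 2 w 1 (-d) t e ltac:(lia) ltac:(lra) ltac:(lra) He E2); subst.
      apply N; right; right; unfold glue1; simpl; repeat split; lra.
    + assert (E2 : ribbon_map V0 0 1 (-d) = ribbon_map V0 0 t e)
        by (rewrite rm1, Ropp_involutive; exact E).
      destruct (inj 0 w 1 (-d) t e ltac:(lia) ltac:(lra) ltac:(lra) He E2); subst.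
      apply N; right; right; unfold glue1; simpl; repeat split; lra.
    + distc 2%nat.
    + distc 0%nat.
    + assert (E2 : ribbon_map V0 1 1 (-d) = ribbon_map V0 1 t e)
        by (rewrite rm1, Ropp_involutive; exact E).
      destruct (inj 1 w 1 (-d) t e ltac:(lia) ltac:(lra) ltac:(lra) He E2); subst.
      apply N; right; right; unfold glue1; simpl; repeat split; lra.
  - rewrite rm1 in E.
    destruct i as [|[|[|i]]]; try lia; destruct j as [|[|[|j]]]; try lia.
    + assert (E2 : ribbon_map V0 1 0 (-d) = ribbon_map V0 1 t e)
        by (rewrite rm0; exact E).
      destruct (inj 1 w 0 (-d) t e ltac:(lia) ltac:(lra) ltac:(lra) He E2); subst.
      apply N; right; left; unfold glue1; simpl; repeat split; lra.
    + distc 2%nat.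
    + distc 0%nat.
    + assert (E2 : ribbon_map V0 2 0 (-d) = ribbon_map V0 2 t e)
        by (rewrite rm0; exact E).
      destruct (inj 2 w 0 (-d) t e ltac:(lia) ltac:(lra) ltac:(lra) He E2); subst.
      apply N; right; left; unfold glue1; simpl; repeat split; lra.
    + rewrite FP3 in E.
      assert (E2 : ribbon_map V0 0 0 (-d) = ribbon_map V0 0 t e)
        by (rewrite rm0; exact E).
      destruct (inj 0 w 0 (-d) t e ltac:(lia) ltac:(lra) ltac:(lra) He E2); subst.
      apply N; right; left; unfold glue1; simpl; repeat split; lra.
    + rewrite FP3 in E. distc 1%nat.
Qed.

Lemma same_sym p q : same_pt p q -> same_pt q p.
Proof. unfold same_pt; intros [->|[H|H]]; auto. Qed.

Lemma dbl w p q : 0 < w < 2*c3 -> double_pt V0 w p q ->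
  0 < rp_s p < 1 /\ 0 < rp_s q < 1 /\ rp_i p <> rp_i q.
Proof.
  intros Hw [Hp [Hq [N E]]].
  destruct p as [[i s] d], q as [[j t] e].
  unfold in_ribbon, image, rp_i, rp_s, rp_d in *; simpl in *.
  destruct Hp as [Hi [Hs Hd]], Hq as [Hj [Ht He]].
  split; [|split].
  - exact (aux w i s d j t e Hw Hi Hj Hs Ht Hd He E N).
  - refine (aux w j t e i s d Hw Hj Hi Ht Hs He Hd (eq_sym E) _).
    intro S; apply N, same_sym, S.
  - exact (neq_piece w i s d j t e ltac:(lra) Hi Hd He E N).
Qed.

Lemma same_int p p' : 0 < rp_s p < 1 -> same_pt p p' -> p' = p.
Proof.
  intros H [->|[G|G]]; [reflexivity| |]; destruct G as [G1 [G2 _]]; lra.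
Qed.

Definition sF (b : bool) : R := if b then 1 else -1.
Definition rr (F : nat -> bool) (a b : nat) : R :=
  if Nat.eqb a ((b+1) mod 3) then sF (F a)
  else if Nat.eqb b ((a+1) mod 3) then - sF (F b) else -1.

Lemma rr_pm F a b : rr F a b = 1 \/ rr F a b = -1.
Proof.
  unfold rr, sF. destruct (Nat.eqb _ _); [destruct (F a); lra|].
  destruct (Nat.eqb _ _); [destruct (F b); lra|lra].
Qed.

Lemma rr_anti F a b : (a < 3)%nat -> (b < 3)%nat -> a <> b -> rr F b a = - rr F a b.
Proof.
  intros Ha Hb Hab.
  destruct a as [|[|[|a]]]; try lia; destruct b as [|[|[|b]]]; try lia;
  unfold rr, sF; simpl; destruct (F 0%nat), (F 1%nat), (F 2%nat); lra.
Qed.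

Lemma rr_trans F a b c : (a < 3)%nat -> (b < 3)%nat -> (c < 3)%nat ->
  a <> b -> b <> c -> a <> c -> rr F a b = 1 -> rr F b c = 1 ->
  rr F a c = 1 \/ all_same_type F.
Proof.
  intros Ha Hb Hc H1 H2 H3.
  unfold all_same_type.
  destruct a as [|[|[|a]]]; try lia; destruct b as [|[|[|b]]]; try lia;
  destruct c as [|[|[|c]]]; try lia;
  unfold rr, sF; simpl; destruct (F 0%nat), (F 1%nat), (F 2%nat); intros;
  try lra; try (left; lra); try (right; split; reflexivity).
Qed.

Lemma dist_le w k s d : (k < 3)%nat -> d <= w/2 -> dist k (ribbon_map V0 k s d) <= w/2.
Proof. intros; rewrite dist_piece; auto. Qed.

Lemma no_triple w (p q r : rpt) : w < 2*c3/3 -> in_ribbon w p -> in_ribbon w q -> in_ribbon w r ->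
  rp_i p <> rp_i q -> rp_i q <> rp_i r -> rp_i p <> rp_i r ->
  image V0 p = image V0 q -> image V0 q = image V0 r -> False.
Proof.
  intros Hw Hp Hq Hr N1 N2 N3 E1 E2.
  destruct Hp as [Hp [_ Hpd]], Hq as [Hq [_ Hqd]], Hr as [Hr [_ Hrd]].
  pose proof (dist_le w _ (rp_s p) (rp_d p) Hp ltac:(lra)) as D1.
  pose proof (dist_le w _ (rp_s q) (rp_d q) Hq ltac:(lra)) as D2.
  pose proof (dist_le w _ (rp_s r) (rp_d r) Hr ltac:(lra)) as D3.
  unfold image in E1, E2. rewrite E1 in D1. rewrite <- E2 in D3.
  set (X := ribbon_map V0 (rp_i q) (rp_s q) (rp_d q)) in *.
  pose proof (dist_sum X).
  destruct (rp_i p) as [|[|[|a]]]; try lia; destruct (rp_i q) as [|[|[|b]]]; try lia;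
  destruct (rp_i r) as [|[|[|c]]]; try lia; lra.
Qed.

Lemma allowed_V0 F w : 0 < w < 2*c3 -> (all_same_type F -> w < 2*c3/3) -> allowed V0 w F.
Proof.
  intros Hw Hall. split.
  - intros i s d Hi Hs Hd. exists 1; split; [lra|].
    intros s1 d1 s2 d2 _ H1 _ H2 _ _ E. exact (inj i w s1 d1 s2 d2 Hi ltac:(lra) H1 H2 E).
  - exists (fun p q => rr F (rp_i p) (rp_i q)). split; [split; [|split; [|split; [|split]]]|].
    + intros p q _. apply rr_pm.
    + intros p q p' q' D Sp Sq _ _.
      destruct (dbl w p q Hw D) as [Ip [Iq _]].
      rewrite (same_int p p' Ip Sp), (same_int q q' Iq Sq). reflexivity.
    + intros p q D. destruct (dbl w p q Hw D) as [_ [_ N]].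
      destruct D as [[Hp _] [[Hq _] _]]. apply rr_anti; auto.
    + intros p q r D1 D2 D3 S1 S2.
      destruct (dbl w p q Hw D1) as [_ [_ N1]].
      destruct (dbl w q r Hw D2) as [_ [_ N2]].
      destruct (dbl w p r Hw D3) as [_ [_ N3]].
      destruct D1 as [Rp [Rq [_ E1]]], D2 as [_ [Rr [_ E2]]].
      destruct (rr_trans F (rp_i p) (rp_i q) (rp_i r) (proj1 Rp) (proj1 Rq) (proj1 Rr)
        N1 N2 N3 S1 S2) as [H|H]; [exact H|].
      exfalso. exact (no_triple w p q r (Hall H) Rp Rq Rr N1 N2 N3 E1 E2).
    + intros p q D. exists 1; split; [lra|].
      intros p' q' [p1 [p2 [Sp1 [Sp2 [Ei _]]]]] [q1 [q2 [Sq1 [Sq2 [Ej _]]]]] D'.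
      destruct (dbl w p q Hw D) as [Ip [Iq _]].
      destruct (dbl w p' q' Hw D') as [Ip' [Iq' _]].
      rewrite (same_int p p1 Ip Sp1) in Ei. rewrite (same_int q q1 Iq Sq1) in Ej.
      rewrite (same_int p' p2 Ip' Sp2) in Ei. rewrite (same_int q' q2 Iq' Sq2) in Ej.
      rewrite Ei, Ej. reflexivity.
    + exists 1; split; [lra|].
      intros i p q Hi Ep _ Eq _ _. rewrite Ep, Eq.
      destruct i as [|[|[|i]]]; try lia; reflexivity.
Qed.

Lemma len_V0 : length_K V0 = 6.
Proof.
  pose proof c3sq.
  unfold length_K, edge, pnorm, vert, psub, dot; simpl.
  replace ((2 - 0) * (2 - 0) + (0 - 0) * (0 - 0)) with 4 by ring.
  replace ((1 - 2) * (1 - 2) + (c3 - 0) * (c3 - 0)) with 4 by nra.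
  replace ((0 - 1) * (0 - 1) + (0 - c3) * (0 - c3)) with 4 by nra.
  rewrite sqrt4; ring.
Qed.

Lemma nondeg_V0 : nondegenerate V0.
Proof.
  pose proof c3pos. unfold nondegenerate, cross, edge, vert, psub; simpl. nra.
Qed.

Theorem proposition4p4 :
  (forall F : nat -> bool, all_same_type F -> min_ribbonlength_le F (3 * sqrt 3)) /\
  (forall F : nat -> bool, ~ all_same_type F -> min_ribbonlength_le F (sqrt 3)).
Proof.
  pose proof c3sq; pose proof c3pos. fold c3.
  split.
  - intros F HF eps He. exists V0, (6 / (3*c3 + eps)).
    assert (Hw : 0 < 6 / (3*c3 + eps)) by (apply Rdiv_lt_0_compat; lra).
    assert (Hw2 : 6 / (3*c3 + eps) < 2*c3/3).
    { apply (Rmult_lt_reg_r (3*c3+eps)); [lra|]. unfold Rdiv. rewrite Rmult_assoc, Rinv_l by lra. nra. }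
    split; [apply nondeg_V0|split; [lra|split]].
    + apply allowed_V0; [split; lra|intros; lra].
    + unfold ribbonlength; rewrite len_V0. right; field; lra.
  - intros F HF eps He. exists V0, (6 / (c3 + eps)).
    assert (Hw : 0 < 6 / (c3 + eps)) by (apply Rdiv_lt_0_compat; lra).
    assert (Hw2 : 6 / (c3 + eps) < 2*c3).
    { apply (Rmult_lt_reg_r (c3+eps)); [lra|]. unfold Rdiv. rewrite Rmult_assoc, Rinv_l by lra. nra. }
    split; [apply nondeg_V0|split; [lra|split]].
    + apply allowed_V0; [split; lra|intros; contradiction].
    + unfold ribbonlength; rewrite len_V0. right; field; lra.
Qed.
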